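(* Let $\Sigma\in\mathsf{c}\text{-}\mathsf{Fan}^{+-}_{\rm sc}(2)$ have $n$ two-dimensional cones and quiddity sequence $\mathrm{s}(\Sigma)=(a_1,\dots,a_{n-2};0,0)$. If $n\ge5$, then there exists $2\le i\le n-3$ with $a_i=1$.
   Context: $\mathsf{c}\text{-}\mathsf{Fan}^{+-}_{\rm sc}(2)$: complete nonsingular fans in $\mathbb{R}^2$ (each 2-dimensional cone generated by a $\mathbb{Z}$-basis) containing $\operatorname{cone}\{(1,0),(0,1)\}$, $\operatorname{cone}\{(-1,0),(0,-1)\}$ and $\operatorname{cone}\{(-1,0),(0,1)\}$, with every cone in a closed coordinate quadrant and every ray in exactly two 2-dimensional cones. Its primitive ray generators in clockwise order are $v_1=(1,0),v_2,\dots,v_{n-2}=(0,-1),v_{n-1}=(-1,0),v_n=(0,1)$, and the integers $a_j$ are defined by $a_jv_j=v_{j-1}+v_{j+1}$ (indices mod $n$). *)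

(* Defs.v *)
From mathcomp Require Import all_boot all_order all_algebra.
Set Implicit Arguments. Unset Strict Implicit. Unset Printing Implicit Defensive.
Import Order.TTheory GRing.Theory Num.Theory.
Local Open Scope ring_scope.

Definition det2 (u w : int * int) : int := u.1 * w.2 - u.2 * w.1.

Definition prevn (n j : nat) : nat := if j == 1%N then n else j.-1.
Definition nextn (n j : nat) : nat := if j == n then 1%N else j.+1.

Definition inQuad (sx sy : int) (u : int * int) : Prop :=
  0 <= sx * u.1 /\ 0 <= sy * u.2.

Definition cone_in_closed_quadrant (u w : int * int) : Prop :=
  exists sx sy : int, (sx = 1 \/ sx = -1) /\ (sy = 1 \/ sy = -1) /\
    inQuad sx sy u /\ inQuad sx sy w.

(* v 1, ..., v n are the primitive ray generators, in clockwise order, of a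
   fan Sigma in c-Fan^{+-}_sc(2) with n two-dimensional cones
   cone{v_j, v_{j+1}} (indices mod n). *)
Definition is_cFan_pm_sc2 (n : nat) (v : nat -> int * int) : Prop :=
  [/\ (4 <= n)%N,
      v 1%N = (1, 0), v (n - 2)%N = (0, -1), v (n - 1)%N = (-1, 0) & v n = (0, 1)]
  /\ (* each 2-dim cone is generated by a Z-basis, oriented clockwise *)
     (forall j : nat, (1 <= j <= n)%N -> det2 (v j) (v (nextn n j)) = -1)
  /\
     (forall j : nat, (1 <= j <= n)%N -> cone_in_closed_quadrant (v j) (v (nextn n j)))
  /\ (* the remaining rays lie outside the three given cones (the fan turns
        exactly once: rays v_2..v_{n-3} lie in the open fourth quadrant) *)
     (forall j : nat, (2 <= j <= n - 3)%N -> 0 < (v j).1 /\ (v j).2 < 0).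

Definition is_quiddity (n : nat) (v : nat -> int * int) (a : nat -> int) : Prop :=
  forall j : nat, (1 <= j <= n)%N ->
    a j * (v j).1 = (v (prevn n j)).1 + (v (nextn n j)).1 /\
    a j * (v j).2 = (v (prevn n j)).2 + (v (nextn n j)).2.

(* Main.v *)
Require Import Defs.
From mathcomp Require Import all_boot all_order all_algebra.
From mathcomp Require Import zify.
Import Order.TTheory GRing.Theory Num.Theory.
Local Open Scope ring_scope.

Lemma argmax_aux (f : nat -> int) (m : nat) :
  exists i, (i <= m)%N /\ forall j, (j <= m)%N -> f j <= f i.
Proof.
elim: m => [|m [i [Hi Hmax]]].
  exists 0%N; split => // j; rewrite leqn0 => /eqP ->; exact: Order.POrderTheory.lexx.
case: (lerP (f m.+1) (f i)) => H.
  exists i; split; first by lia.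
  move=> j; rewrite leq_eqVlt => /orP [/eqP -> //|]; rewrite ltnS; exact: Hmax.
exists m.+1; split => // j; rewrite leq_eqVlt => /orP [/eqP -> //|].
rewrite ltnS => Hj; have := Hmax j Hj; lia.
Qed.

Lemma nodiv (c d : int) : 2 <= c -> c * d = -1 -> False.
Proof.
move=> Hc Hcd; case: (ltrgtP d 0) => Hd.
- have : c * d <= c * (-1) by rewrite ler_pM2l; lia. lia.
- have : c * 1 <= c * d by rewrite ler_pM2l; lia. lia.
- by move: Hcd; rewrite Hd mulr0.
Qed.

Lemma bnd (u w : int * int) : 0 < u.1 -> u.2 < 0 -> 0 < w.1 -> w.2 < 0 ->
  u.1 - u.2 <= w.1 - w.2 -> 1 <= u.1 - u.2 <= w.1 - w.2.
Proof. move=> *; apply/andP; split; lia. Qed.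

Theorem lemma2p11 (n : nat) (v : nat -> int * int) (a : nat -> int) :
  is_cFan_pm_sc2 n v -> is_quiddity n v a -> (5 <= n)%N ->
  exists i : nat, (2 <= i <= n - 3)%N /\ a i = 1.
Proof.
move=> [[H4 v1 vn2 vn1 vn] [Hdet [_ Hint]]] Hq H5.
pose f k := (v (k + 2)%N).1 - (v (k + 2)%N).2.
have [k [Hk Hmax]] := argmax_aux f (n - 5).
exists (k + 2)%N; split; first by lia.
have {Hmax} Hmax : forall j, (j <= n - 5)%N -> f j <= (v (k + 2)%N).1 - (v (k + 2)%N).2 := Hmax.
set i := (k + 2)%N.
have Hi : (2 <= i <= n - 3)%N by rewrite /i; lia.
have Hpr : prevn n i = i.-1 by rewrite /prevn; case: eqP => //; lia.
have Hnx : nextn n i = i.+1 by rewrite /nextn; case: eqP => //; lia.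
have [q1 q2] := Hq i ltac:(lia).
have Hd := Hdet i ltac:(lia).
rewrite Hpr Hnx in q1 q2; rewrite Hnx /det2 in Hd.
have [xi yi] := Hint i Hi.
have Hprev : 1 <= (v i.-1).1 - (v i.-1).2 <= (v i).1 - (v i).2.
  case: (ltnP 2 i) => Hi2.
    have [hx hy] := Hint i.-1 ltac:(lia).
    have := Hmax (i.-1 - 2)%N ltac:(lia).
    rewrite /f /= (_ : (i.-1 - 2 + 2 = i.-1)%N); last by lia.
    move=> Hm; exact: bnd.
  have -> : i.-1 = 1%N by lia.
  rewrite v1; clear -xi yi; apply/andP; split => /=; lia.
have Hnext : 1 <= (v i.+1).1 - (v i.+1).2 <= (v i).1 - (v i).2.
  case: (ltnP i.+1 (n - 2)) => Hi2.
    have [hx hy] := Hint i.+1 ltac:(lia).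
    have := Hmax (i.+1 - 2)%N ltac:(lia).
    rewrite /f /= (_ : (i.+1 - 2 + 2 = i.+1)%N); last by lia.
    move=> Hm; exact: bnd.
  have -> : i.+1 = (n - 2)%N by lia.
  rewrite vn2; clear -xi yi; apply/andP; split => /=; lia.
move: Hprev Hnext Hd q1 q2 xi yi.
set x := (v i).1; set y := (v i).2; set p := (v i.+1).1; set q := (v i.+1).2.
set r := (v i.-1).1; set s := (v i.-1).2; set ai := a i.
move=> Hprev Hnext Hd q1 q2 xi yi.
have Hsum : ai * (x - y) = (r - s) + (p - q) by rewrite mulrBr q1 q2; lia.
have Hpos : 0 < ai by nia.
have Hle : ai <= 2 by nia.
have Hne : ai != 2.
  apply/eqP => Ha; rewrite Ha in Hsum.
  have Hpq : p - q = x - y by lia.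
  have : (x - y) * (q - y) = -1 by nia.
  apply: nodiv; lia.
lia.
Qed.
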